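(* Let $\mathcal{X}$ be a set with $|\mathcal{X}|\ge2$ and $\mathcal{D}$ the class of all finite multisets with elements drawn from $\mathcal{X}$. Let $d\colon\mathcal{X}\times\mathcal{X}\to[0,1]$ be a normalized distance and, for $x\in D$, let $\mathrm{avg}(x,D)=\frac{1}{|D|}\sum_{z\in D}d(x,z)$ (sum with multiplicity). For $K\in(0,1)\cap\mathbb{Q}$, consider the deterministic suppression algorithm $\mathcal{S}_K(D)=\{x\in D\mid\mathrm{avg}(x,D)\le K\}$ (as a sub-multiset of $D$). Then $\Delta_{\mathcal{D}}\mathcal{S}_K=\infty$.
   Context: A normalized distance is a metric $d$ on $\mathcal{X}$ with values in $[0,1]$ and $\sup_{x,y\in\mathcal{X}}d(x,y)=1$. Two databases are (unbounded) neighboring if one is obtained from the other by adding exactly one record. For a deterministic suppression algorithm $\mathcal{S}$ (a map sending each database $D$ to a sub-multiset of $D$), its sensitivity is $\Delta_{\mathcal{D}}\mathcal{S}=\sup_{D,D'\in\mathcal{D}\text{ neighboring}}|\mathcal{S}(D)\,\Delta\,\mathcal{S}(D')|$, where $\Delta$ is multiset symmetric difference. *)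

(* Defs.v *)
From HB Require Import structures.
From mathcomp Require Import all_boot all_order all_algebra.
From mathcomp Require Import classical_sets boolp reals ereal.
Set Implicit Arguments. Unset Strict Implicit. Unset Printing Implicit Defensive.
Import Order.TTheory GRing.Theory Num.Theory.
Local Open Scope ring_scope.
Local Open Scope classical_set_scope.

(* Finite multisets over T are represented by sequences up to permutation;
   all notions below are invariant under permutation (perm_eq). *)

Definition normalized_distance (R : realType) (T : eqType) (d : T -> T -> R) :=
  [/\ (forall x y, d x y = 0 <-> x = y),
      (forall x y, d x y = d y x),
      (forall x y z, d x z <= d x y + d y z),
      (forall x y, 0 <= d x y <= 1) &
      sup (range (fun p : T * T => d p.1 p.2)) = 1].

Definition avg (R : realType) (T : eqType) (d : T -> T -> R) (x : T) (D : seq T) : R :=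
  (\sum_(z <- D) d x z) / (size D)%:R.

Definition S_K (R : realType) (T : eqType) (d : T -> T -> R) (K : rat) (D : seq T) : seq T :=
  [seq x <- D | avg d x D <= ratr K].

Definition neighboring (T : eqType) (D D' : seq T) : Prop :=
  (exists x, perm_eq D' (x :: D)) \/ (exists x, perm_eq D (x :: D')).

Definition msymdiff (T : eqType) (s t : seq T) : nat :=
  (\sum_(a <- undup (s ++ t)) ((count_mem a s - count_mem a t) + (count_mem a t - count_mem a s)))%N.

Arguments S_K : clear implicits.
Definition sensitivity (R : realType) (T : eqType) (S : seq T -> seq T) : \bar R :=
  ereal_sup [set e : \bar R | exists D D' : seq T,
    neighboring D D' /\ e = ((msymdiff (S D) (S D'))%:R)%:E].

(* Main.v *)
Require Import Defs.
From HB Require Import structures.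
From mathcomp Require Import all_boot all_order all_algebra.
From mathcomp Require Import classical_sets boolp reals ereal.
From mathcomp Require Import lra.
Import Order.TTheory GRing.Theory Num.Theory.
Local Open Scope ring_scope.

Lemma sum_nseq (R : realType) (T : Type) (f : T -> R) n w :
  \sum_(z <- nseq n w) f z = f w *+ n.
Proof. rewrite big_nseq; elim: n => [|n IH] //=; by rewrite IH mulrS. Qed.

Lemma msym_ge (T : eqType) (s t : seq T) x :
  x \in s -> (count_mem x s - count_mem x t <= msymdiff s t)%N.
Proof.
move=> xs; rewrite /msymdiff (big_rem x) /=; last by rewrite mem_undup mem_cat xs.
by rewrite -addnA leq_addr.
Qed.

Theorem proposition2 (R : realType) (T : eqType) (d : T -> T -> R) (K : rat) :
  (exists x y : T, x != y) ->
  normalized_distance d ->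
  0 < K < 1 ->
  sensitivity R (S_K R T d K) = +oo%E.
Proof.
move=> [x0 [y0 _]] [d0 dsym _ d01 dsup] /andP[K0 K1].
set k : R := ratr K.
have k0 : 0 < k by rewrite ltr0q.
have k1 : k < 1 by rewrite -(rmorph1 (ratr : rat -> R)) ltr_rat.
have [e [[x y] _ <-] /= he] : exists2 e, range (fun p : T * T => d p.1 p.2) e & 1 - (1 - k) < e.
  have ep : 0 < 1 - k by rewrite subr_gt0.
  have := @sup_adherent R (range (fun p : T * T => d p.1 p.2)) (1 - k) ep.
  rewrite dsup; apply.
  split; first by exists (d x0 y0); exists (x0, y0).
  by exists 1 => _ [p _ <-]; case/andP: (d01 p.1 p.2).
have hd : k < d x y by move: he; rewrite opprB addrCA subrr addr0.
have xy : y != x.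
  apply/eqP => yx; move: hd; rewrite yx (proj2 (d0 x x) erefl); lra.
have dxx : d x x = 0 by apply/d0.
have key : forall a : nat, (0 < a)%N -> exists D D' : seq T,
    neighboring D D' /\ (a <= msymdiff (S_K R T d K D) (S_K R T d K D'))%N.
  move=> a a0.
  set c : R := k * a%:R / (d x y - k).
  have dk : 0 < d x y - k by rewrite subr_gt0.
  have c0 : 0 <= c.
    rewrite /c; apply: divr_ge0; last exact: ltW.
    apply: mulr_ge0; [exact: ltW | exact: ler0n].
  set b := Num.truncn c.
  have /andP[hb1 hb2] := truncn_itv c0.
  rewrite -/b in hb1 hb2.
  move: hb1 hb2; rewrite ler_pdivlMr // ltr_pdivrMr // => hb1 hb2.
  set D := nseq a x ++ nseq b y.
  exists D, (y :: D); split; first by left; exists y.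
  have A0 : 0 < a%:R :> R by rewrite ltr0n.
  have px : avg d x D <= k.
    rewrite /avg big_cat /= !sum_nseq dxx mul0rn add0r size_cat !size_nseq natrD.
    rewrite ler_pdivrMr; last by apply: ltr_wpDr.
    rewrite -mulr_natr; lra.
  have px' : ~~ (avg d x (y :: D) <= k).
    rewrite /avg big_cons big_cat /= !sum_nseq dxx mul0rn add0r size_cat !size_nseq.
    rewrite -ltNge ltr_pdivlMr; last by rewrite ltr0n.
    rewrite -[(_ + _).+1]addn1 !natrD -mulr_natr; lra.
  have cD : count_mem x (S_K R T d K D) = a.
    rewrite /S_K count_filter count_cat !count_nseq /= eqxx (negbTE xy) andFb.
    rewrite /k in px; by rewrite px mul1n mul0n addn0.
  have cD' : count_mem x (S_K R T d K (y :: D)) = 0%N.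
    rewrite /S_K count_filter /= count_cat !count_nseq /= eqxx (negbTE xy) !andFb.
    rewrite /k in px'; by rewrite (negbTE px').
  have := @msym_ge _ (S_K R T d K D) (S_K R T d K (y :: D)) x.
  rewrite cD cD' subn0; apply.
  by rewrite -has_pred1 has_count cD.
have ge : forall n : nat, (n%:R%:E <= sensitivity R (S_K R T d K))%E.
  move=> n; have [D [D' [hn hle]]] := key n.+1 isT.
  apply: (@le_trans _ _ ((msymdiff (S_K R T d K D) (S_K R T d K D'))%:R%:E)).
    by rewrite lee_fin ler_nat (leq_trans (leqnSn n)).
  by apply: ereal_sup_ubound; exists D, D'.
move: ge; case: (sensitivity R _) => [r | // | ] ge.
- have := ge (Num.truncn r).+1; rewrite lee_fin => h.
  exfalso; have := real_truncnS_gt (num_real r); lra.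
- by have := ge 0%N.
Qed.
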